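(* Let $P$ be a simple $d$-polytope. (1) If $v$ is a vertex of $P$ then the interval $[P,v]=\{f\in\mathscr F(P): P\le f\le v\}$ is a Boolean lattice of rank $d$; in particular, facets $f_1,\dots,f_k$ with $\bigvee f_i<\varnothing$ are independent. (2) If $P$ is the $d$-cube or the $d$-permutohedron and $f_1,\dots,f_k\in\mathscr F(P)$ are independent facets with $\bigvee f_i=\varnothing$, then $k\le2$.
   Context: $\mathscr F(P)$ is the set of faces of the convex polytope $P$ (including $P$ and $\varnothing$) ordered by reverse inclusion, so $f_1\vee f_2=f_1\cap f_2$, the least element is $P$ and the greatest is $\varnothing$; the atoms are the facets. A $d$-polytope is simple if every vertex lies in exactly $d$ facets. A set $S$ of facets is independent if $\bigvee(S\setminus\{s\})<\bigvee S$ (i.e. $\bigcap(S\setminus\{s\})\supsetneq\bigcap S$) for every $s\in S$. The $d$-cube is the convex hull of $\{\sum_i\varepsilon_iv_i:\varepsilon_i=\pm1\}\subset\mathbb R^d$; the $d$-permutohedron is the convex hull of $\{\sum_i m_{i\pi}v_i:\pi\in\mathfrak S_{d+1}\}\subset\mathbb R^{d+1}$ for fixed integers $0\le m_1<\dots<m_{d+1}$. The Boolean lattice of rank $d$ is the lattice of subsets of a $d$-set. *)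

(* Defs.v *)
From HB Require Import structures.
From mathcomp Require Import all_boot all_order all_algebra all_fingroup.
From mathcomp Require Import boolp classical_sets.
From mathcomp Require Import reals.

Set Implicit Arguments.
Unset Strict Implicit.
Unset Printing Implicit Defensive.

Import Order.TTheory GRing.Theory Num.Theory.
Local Open Scope ring_scope.
Local Open Scope classical_set_scope.

Section Polytopes.
Variables (R : realType) (n : nat).
Notation pt := 'rV[R]_n.

Definition dot (c x : pt) : R := \sum_(i < n) c 0 i * x 0 i.

Definition conv (V : seq pt) : set pt :=
  [set x | exists w : 'I_(size V) -> R,
     (forall i, 0 <= w i) /\ \sum_i w i = 1 /\ x = \sum_i w i *: V`_i].

Definition is_polytope (P : set pt) : Prop := exists V : seq pt, P = conv V.

Definition aff_indep (k : nat) (x : 'I_k.+1 -> pt) : Prop :=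
  \rank (\matrix_(i < k) (x (lift ord0 i) - x ord0)) = k.

Definition affdim (S : set pt) (d : nat) : Prop :=
  (exists x : 'I_d.+1 -> pt, (forall i, S (x i)) /\ aff_indep x) /\
  (forall x : 'I_d.+2 -> pt, (forall i, S (x i)) -> ~ aff_indep x).

(* faces of P (including P itself and the empty face):
   intersections of P with supporting hyperplanes {c.x = b}, c.x <= b on P *)
Definition is_face (P F : set pt) : Prop :=
  exists (c : pt) (b : R), (forall x, P x -> dot c x <= b) /\
     F = [set x | P x /\ dot c x = b].

(* facets = atoms of the face lattice (ordered by reverse inclusion):
   faces F <> P such that no face lies strictly between P and F *)
Definition is_facet (P F : set pt) : Prop :=
  is_face P F /\ F <> P /\
  (forall G, is_face P G -> F `<=` G -> G = F \/ G = P).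

Definition is_vertex (P : set pt) (v : pt) : Prop := is_face P [set v].

Definition simple_polytope (P : set pt) (d : nat) : Prop :=
  is_polytope P /\ affdim P d /\
  forall v, is_vertex P v ->
    exists f : 'I_d -> set pt, injective f /\
      (forall i, is_facet P (f i) /\ f i v) /\
      (forall F, is_facet P F -> F v -> exists i, F = f i).

(* join in F(P) of a family of faces = intersection (join of nothing = P) *)
Definition fjoin (P : set pt) (k : nat) (f : 'I_k -> set pt) (I : set 'I_k) :
  set pt := P `&` \bigcap_(i in I) f i.

Definition independent (P : set pt) (k : nat) (f : 'I_k -> set pt) : Prop :=
  forall j : 'I_k, fjoin P f [set i | i != j] <> fjoin P f setT.

(* the interval [P, v] of F(P) is a Boolean lattice of rank d:
   order-isomorphic to the subsets of a d-set *)
Definition interval_boolean (P : set pt) (v : pt) (d : nat) : Prop :=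
  exists phi : {F : set pt | is_face P F /\ F v} -> {set 'I_d},
    bijective phi /\
    forall F G, (sval G `<=` sval F) <-> (phi F \subset phi G).

End Polytopes.

Definition cube (R : realType) (d : nat) : set 'rV[R]_d :=
  conv [seq (\row_(i < d) (if eps i then 1 else -1) : 'rV[R]_d)
       | eps : {ffun 'I_d -> bool}].

Definition permutohedron (R : realType) (d : nat) (m : 'I_d.+1 -> nat)
  : set 'rV[R]_d.+1 :=
  conv [seq (\row_(i < d.+1) ((m (pi i))%:R) : 'rV[R]_d.+1) | pi : 'S_d.+1].

(* Main.v *)
From HB Require Import structures.
From mathcomp Require Import all_boot all_order all_algebra all_fingroup.
From mathcomp Require Import boolp classical_sets.
From mathcomp Require Import reals.
Require Import Defs.
From mathcomp Require Import ring lra.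
Import Order.TTheory GRing.Theory Num.Theory.
Set Implicit Arguments.
Unset Strict Implicit.
Unset Printing Implicit Defensive.
Local Open Scope ring_scope.
Local Open Scope classical_set_scope.

Section Dot.
Variables (R : realType) (n : nat).
Local Notation pt := 'rV[R]_n.

Lemma dotDr (c x y : pt) : dot c (x + y) = dot c x + dot c y.
Proof. by rewrite /dot -big_split; apply: eq_bigr => i _; rewrite mxE mulrDr. Qed.
Lemma dotDl (c c' x : pt) : dot (c + c') x = dot c x + dot c' x.
Proof. by rewrite /dot -big_split; apply: eq_bigr => i _; rewrite mxE mulrDl. Qed.
Lemma dotZr (c x : pt) a : dot c (a *: x) = a * dot c x.
Proof. by rewrite /dot mulr_sumr; apply: eq_bigr => i _; rewrite mxE mulrCA. Qed.
Lemma dotZl (c x : pt) a : dot (a *: c) x = a * dot c x.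
Proof. by rewrite /dot mulr_sumr; apply: eq_bigr => i _; rewrite mxE mulrA. Qed.
Lemma dot0r (c : pt) : dot c 0 = 0.
Proof. by rewrite /dot big1 // => i _; rewrite mxE mulr0. Qed.
Lemma dot0l (c : pt) : dot 0 c = 0.
Proof. by rewrite /dot big1 // => i _; rewrite mxE mul0r. Qed.
Lemma dotNr (c x : pt) : dot c (- x) = - dot c x.
Proof. by rewrite -scaleN1r dotZr mulN1r. Qed.
Lemma dotNl (c x : pt) : dot (- c) x = - dot c x.
Proof. by rewrite -scaleN1r dotZl mulN1r. Qed.
Lemma dotBr (c x y : pt) : dot c (x - y) = dot c x - dot c y.
Proof. by rewrite dotDr dotNr. Qed.
Lemma dotBl (c c' x : pt) : dot (c - c') x = dot c x - dot c' x.
Proof. by rewrite dotDl dotNl. Qed.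
Lemma dot_sumr I (r : seq I) (Pr : pred I) (F : I -> pt) (c : pt) :
  dot c (\sum_(i <- r | Pr i) F i) = \sum_(i <- r | Pr i) dot c (F i).
Proof. exact: (big_morph (dot c) (dotDr c) (dot0r c)). Qed.
Lemma dot_suml I (r : seq I) (Pr : pred I) (F : I -> pt) (x : pt) :
  dot (\sum_(i <- r | Pr i) F i) x = \sum_(i <- r | Pr i) dot (F i) x.
Proof. by apply: (big_morph (fun c => dot c x)) => [c c'|]; rewrite ?dotDl ?dot0l. Qed.
Lemma dotC (x y : pt) : dot x y = dot y x.
Proof. by rewrite /dot; apply: eq_bigr => i _; rewrite mulrC. Qed.
Lemma dot_delta (j : 'I_n) (x : pt) : dot (delta_mx 0 j) x = x 0 j.
Proof.
rewrite /dot (bigD1 j) //= big1 ?addr0 => [|i /negbTE ij].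
  by rewrite mxE !eqxx mul1r.
by rewrite mxE ij andbF mul0r.
Qed.
Lemma dot_self_gt0 (x : pt) : x != 0 -> 0 < dot x x.
Proof.
move=> nz; have [j xj] : exists j, x 0 j != 0.
  apply/existsP; apply: contraR nz; rewrite negb_exists => /forallP H.
  by apply/eqP/rowP => j; rewrite mxE; apply/eqP/negbNE/H.
rewrite /dot (bigD1 j) //=; apply: ltr_pwDl.
  by rewrite lt0r mulf_neq0 //= -expr2 sqr_ge0.
by rewrite sumr_ge0 // => i _; rewrite -expr2 sqr_ge0.
Qed.
End Dot.

Section Fin.
Variable R : realType.

Lemma bigM N (s a : 'I_N -> R) : exists M, 0 <= M /\
  forall u, s u < 0 -> a u + M * s u < 0.
Proof.
exists (1 + \sum_u (`|a u| / `|s u|)); split.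
  by rewrite addr_ge0 // sumr_ge0 // => u _; rewrite divr_ge0.
move=> u su.
have sn : `|s u| = - s u by rewrite ltr0_norm.
have hu : `|a u| / `|s u| <= \sum_u (`|a u| / `|s u|).
  by rewrite (bigD1 u) //= lerDl sumr_ge0 // => i _; rewrite divr_ge0.
have sp : 0 < `|s u| by rewrite normr_gt0 ltr0_neq0.
have : `|a u| <= (\sum_u (`|a u| / `|s u|)) * `|s u|.
  by rewrite -ler_pdivrMr.
rewrite sn => H.
have := ler_norm (a u).
rewrite mulrDl mul1r; nra.
Qed.

Lemma minratio N (s t : 'I_N -> R) : (forall u, s u <= 0) -> (forall u, t u <= 0) ->
  (forall u, t u < 0 -> s u < 0) -> (exists u, t u < 0) ->
  exists e, 0 < e /\ (exists u0, t u0 < 0 /\ s u0 = e * t u0) /\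
    forall u, s u - e * t u <= 0.
Proof.
move=> s0 t0 ts [u1 tu1].
case: (@arg_minP _ R _ u1 (fun u => t u < 0) (fun u => s u / t u) tu1).
move=> u0 tu0 Hmin.
exists (s u0 / t u0); split; first by rewrite -divrNN divr_gt0 ?oppr_gt0 // ts.
split; first by exists u0; split => //; rewrite divfK // ltr0_neq0.
move=> u; have [tu|] := ltP (t u) 0.
  have := Hmin u tu; rewrite subr_le0 => H.
  have -> : s u = s u / t u * t u by rewrite divfK // ltr0_neq0.
  by rewrite ler_wnM2r // ltW.
move=> tu; have -> : t u = 0 by apply/eqP; rewrite eq_le tu t0.
by rewrite mulr0 subr0.
Qed.
End Fin.

Section Conv.
Variables (R : realType) (n : nat) (V : seq 'rV[R]_n).
Local Notation pt := 'rV[R]_n.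
Local Notation N := (size V).
Local Notation P := (conv V).

Lemma conv_vert (u : 'I_N) : P V`_u.
Proof.
exists (fun i => (i == u)%:R); split; first by move=> i; rewrite ler0n.
split; first by rewrite (bigD1 u) //= eqxx big1 ?addr0 // => i /negbTE ->.
rewrite (bigD1 u) //= eqxx scale1r big1 ?addr0 // => i /negbTE ->.
by rewrite scale0r.
Qed.

Lemma conv_dot (w : 'I_N -> R) (c : pt) b :
  \sum_i w i = 1 ->
  dot c (\sum_i w i *: V`_i) - b = \sum_i w i * (dot c V`_i - b).
Proof.
move=> w1; rewrite dot_sumr.
have -> : \sum_i w i * (dot c V`_i - b) = \sum_i w i * dot c V`_i - (\sum_i w i) * b.
  by rewrite mulr_suml -sumrB; apply: eq_bigr => i _; rewrite mulrBr.
by rewrite w1 mul1r; congr (_ - _); apply: eq_bigr => i _; rewrite dotZr.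
Qed.

Lemma conv_le (c : pt) b : (forall u : 'I_N, dot c V`_u <= b) ->
  forall x, P x -> dot c x <= b.
Proof.
move=> H x [w [w0 [w1 ->]]]; rewrite -subr_le0 conv_dot //.
by rewrite sumr_le0 // => i _; rewrite mulr_ge0_le0 // subr_le0.
Qed.

Lemma conv_tight (c : pt) b (w : 'I_N -> R) : (forall u : 'I_N, dot c V`_u <= b) ->
  (forall i, 0 <= w i) -> \sum_i w i = 1 ->
  dot c (\sum_i w i *: V`_i) = b -> forall u : 'I_N, 0 < w u -> dot c V`_u = b.
Proof.
move=> H w0 w1 /eqP; rewrite -subr_eq0 conv_dot // => /eqP E u wu.
have E' : \sum_i (- (w i * (dot c V`_i - b))) = 0 by rewrite sumrN E oppr0.
have hp : forall i, predT i -> 0 <= - (w i * (dot c V`_i - b)).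
  by move=> i _; rewrite oppr_ge0 mulr_ge0_le0 // subr_le0.
have := psumr_eq0P hp E' (i:=u) isT.
by move/eqP; rewrite oppr_eq0 mulf_eq0 subr_eq0 (gt_eqF wu) /= => /eqP.
Qed.

Lemma pos_weight (w : 'I_N -> R) : (forall i, 0 <= w i) -> \sum_i w i = 1 ->
  exists u, 0 < w u.
Proof.
move=> w0 w1; apply/not_existsP => H.
have : \sum_i w i = 0 by rewrite big1 // => i _; apply/eqP; rewrite eq_le w0 andbT leNgt; apply/negP/H.
by rewrite w1 => /eqP; rewrite oner_eq0.
Qed.

Lemma dot_sq_lemma (p q : pt) : dot q q <= dot p p ->
  dot p q <= dot p p /\ (dot p q = dot p p -> q = p).
Proof.
move=> H.
have E : dot (p - q) (p - q) = dot p p - 2 * dot p q + dot q q.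
  rewrite !dotBl !dotBr (dotC q p); lra.
have [->|nz] := eqVneq q p; first by split.
have := dot_self_gt0 (x := p - q); rewrite subr_eq0 eq_sym nz E => /(_ isT) G.
split; first lra.
move=> E2; exfalso; lra.
Qed.

Lemma exists_vertex (c : pt) b : (forall u : 'I_N, dot c V`_u <= b) ->
  (exists u : 'I_N, dot c V`_u = b) -> exists p, is_vertex P p /\ dot c p = b.
Proof.
move=> hs [u1 hu1].
have hu1' : dot c V`_u1 == b by apply/eqP.
case: (@arg_maxP _ R _ u1 (fun u => dot c V`_u == b) (fun u => dot V`_u V`_u) hu1').
move=> u0 /eqP t0 Hmax; set p := V`_u0.
have [M [M0 HM]] := bigM (fun u : 'I_N => dot c V`_u - b) (fun u : 'I_N => dot p V`_u - dot p p).
have key : forall u : 'I_N, dot (p + M *: c) V`_u - (dot p p + M * b) =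
   (dot p V`_u - dot p p) + M * (dot c V`_u - b).
  by move=> u; rewrite dotDl dotZl; lra.
have hle : forall u : 'I_N, dot (p + M *: c) V`_u <= dot p p + M * b /\
   (dot (p + M *: c) V`_u = dot p p + M * b -> V`_u = p).
  move=> u; rewrite -subr_le0 key.
  have [su|] := ltP (dot c V`_u - b) 0.
    have := HM u su => /= H; split; first exact: ltW.
    by move/eqP; rewrite -subr_eq0 key (negbTE (ltr0_neq0 H)).
  move=> su; have sE : dot c V`_u = b.
    by apply/eqP; rewrite eq_le hs /= -subr_ge0.
  have [d1 d2] := dot_sq_lemma (q := V`_u) (p := p) (Hmax u (introT eqP sE)).
  rewrite sE subrr mulr0 addr0 subr_le0; split => // /eqP.
  by rewrite -subr_eq0 key sE subrr mulr0 addr0 subr_eq0 => /eqP /d2.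
exists p; split; last by [].
exists (p + M *: c), (dot p p + M * b); split.
  by apply: conv_le => u; case: (hle u).
apply/seteqP; split => x /=.
  move=> ->; split; first exact: conv_vert.
  by rewrite dotDl dotZl t0.
move=> [[w [w0 [w1 xE]]] tx].
have ht := conv_tight (fun u => (hle u).1) w0 w1; rewrite -xE in ht.
have := ht tx => {}ht.
rewrite xE.
have -> : \sum_i w i *: V`_i = \sum_i w i *: p.
  apply: eq_bigr => i _; have [wi|] := ltP 0 (w i).
    by rewrite ((hle i).2 (ht i wi)).
  move=> wi; have w0i : w i = 0 by apply/eqP; rewrite eq_le wi w0.
  by rewrite w0i !scale0r.
by rewrite -scaler_suml w1 scale1r.
Qed.
End Conv.

Lemma sum_nonpos_eq0 (R : realType) N (F : 'I_N -> R) :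
  (forall i, F i <= 0) -> \sum_i F i = 0 -> forall i, F i = 0.
Proof.
move=> H E i.
have E' : \sum_i (- F i) = 0 by rewrite sumrN E oppr0.
have hp : forall i, predT i -> 0 <= - F i by move=> j _; rewrite oppr_ge0.
by have /eqP := psumr_eq0P hp E' (i:=i) isT; rewrite oppr_eq0 => /eqP.
Qed.

Section AtVertex.
Variables (R : realType) (n : nat) (V : seq 'rV[R]_n) (v : 'rV[R]_n).
Local Notation pt := 'rV[R]_n.
Local Notation N := (size V).
Local Notation P := (conv V).

Definition val (c : pt) (u : 'I_N) := dot c V`_u - dot c v.
Definition sup (c : pt) := forall u, val c u <= 0.
Definition face_at (c : pt) := [set x | P x /\ dot c x = dot c v].

Hypothesis hvP : P v.

Lemma valB c c' t u : val (c - t *: c') u = val c u - t * val c' u.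
Proof. rewrite /val !dotBl !dotZl; ring. Qed.
Lemma valD c c' u : val (c + c') u = val c u + val c' u.
Proof. rewrite /val !dotDl; ring. Qed.
Lemma valZ c t u : val (t *: c) u = t * val c u.
Proof. rewrite /val !dotZl; ring. Qed.
Lemma val_sum (I : finType) (Q : pred I) (F : I -> pt) u :
  val (\sum_(i | Q i) F i) u = \sum_(i | Q i) val (F i) u.
Proof. by rewrite /val !dot_suml -sumrB. Qed.

Lemma dotP_val x : P x -> exists w : 'I_N -> R, (forall u, 0 <= w u) /\
  forall c, dot c x - dot c v = \sum_u w u * val c u.
Proof.
move=> [w [w0 [w1 ->]]]; exists w; split => // c.
by rewrite conv_dot.
Qed.

Lemma sup_le c : sup c -> forall x, P x -> dot c x <= dot c v.
Proof. move=> hc; apply: conv_le => u; rewrite -subr_le0; exact: hc. Qed.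

Lemma face_at_face c : sup c -> is_face P (face_at c).
Proof. by move=> hc; exists c, (dot c v); split => //; exact: sup_le. Qed.

Lemma face_at_v c : face_at c v.
Proof. by split. Qed.

Lemma face_at_vert c (u : 'I_N) : face_at c V`_u <-> val c u = 0.
Proof.
split; first by move=> [_ E]; rewrite /val E subrr.
move/eqP; rewrite /val subr_eq0 => /eqP E; split => //; exact: conv_vert.
Qed.

Lemma face_to_at F : is_face P F -> F v -> exists c, sup c /\ F = face_at c.
Proof.
move=> [c [b [hle ->]]] [_ hb]; exists c; split.
  by move=> u; rewrite /val hb subr_le0; apply: hle; exact: conv_vert.
by rewrite /face_at hb.
Qed.

Lemma face_at_sub c c' : sup c -> (forall u, val c u = 0 -> val c' u = 0) ->
  face_at c `<=` face_at c'.
Proof.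
move=> hc H x [Px tx]; split => //.
have [w [w0 hw]] := dotP_val Px.
have /eqP := hw c; rewrite tx subrr eq_sym => /eqP E0.
have Hz := sum_nonpos_eq0 (fun u => mulr_ge0_le0 (w0 u) (hc u)) E0.
apply/eqP; rewrite -subr_eq0 hw; apply/eqP; apply: big1 => u _.
have := Hz u => /eqP; rewrite mulf_eq0 => /orP [/eqP ->|/eqP /H ->];
  by rewrite ?mul0r ?mulr0.
Qed.

Lemma face_at_P c : sup c -> (face_at c = P <-> forall u, val c u = 0).
Proof.
move=> hc; split.
  by move=> E u; apply/face_at_vert; rewrite E; exact: conv_vert.
move=> H; apply/seteqP; split => x; first by case.
move=> Px; have := @face_at_sub 0 c _ _ x; apply.
- by move=> u; rewrite /val !dot0l subrr.
- by move=> u _; exact: H.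
- by split => //; rewrite !dot0l.
Qed.

Section Facets.
Variables (d : nat) (g : 'I_d -> set pt) (cg : 'I_d -> pt).
Hypothesis hcg : forall i, sup (cg i).
Hypothesis hg : forall i, g i = face_at (cg i).
Hypothesis hfac : forall i, is_facet P (g i).
Hypothesis hall : forall F, is_facet P F -> F v -> exists i, F = g i.

Definition negs c : {set 'I_N} := finset (fun u : 'I_N => val c u < 0).

Lemma Gen c : sup c -> exists lam : 'I_d -> R, (forall i, 0 <= lam i) /\
  forall u, val c u = \sum_i lam i * val (cg i) u.
Proof.
suff H : forall k c, (#|negs c| < k)%N -> sup c -> exists lam : 'I_d -> R,
    (forall i, 0 <= lam i) /\ forall u, val c u = \sum_i lam i * val (cg i) u.
  by move=> hc; apply: (H #|negs c|.+1).
elim=> [//|k IH] {}c hk hc.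
have [allz|] := boolP [forall u, val c u == 0].
  exists (fun _ => 0); split => // u.
  by rewrite (eqP (forallP allz u)) big1 // => i _; rewrite mul0r.
rewrite negb_forall => /existsP [u1 hu1].
have u1neg : val c u1 < 0 by rewrite lt_neqAle hu1 hc.
have hface := face_at_face hc.
have Fne : face_at c <> P.
  by move/(face_at_P hc) => /(_ u1) /eqP; rewrite (negbTE hu1).
case: (pselect (is_facet P (face_at c))) => [fac|nfac].
  have [i Ei] := hall fac (face_at_v c).
  have tE : forall u, val c u = 0 <-> val (cg i) u = 0.
    move=> u; split => H.
      by apply/face_at_vert; rewrite -hg -Ei; apply/face_at_vert.
    by apply/face_at_vert; rewrite Ei hg; apply/face_at_vert.
  have ts : forall u, val (cg i) u < 0 -> val c u < 0.
    move=> u tu; rewrite lt_neqAle hc andbT; apply/eqP => /tE.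
    by move/eqP; rewrite (negbTE (ltr0_neq0 tu)).
  have ex1 : exists u, val (cg i) u < 0.
    exists u1; rewrite lt_neqAle hcg andbT; apply/eqP => /tE.
    by move/eqP; rewrite (negbTE hu1).
  have [e [e0 [[u0 [tu0 su0]] hle]]] := minratio hc (hcg i) ts ex1.
  set c'' := c - e *: cg i.
  have hc'' : sup c'' by move=> u; rewrite /c'' valB.
  have sub : g i `<=` face_at c''.
    rewrite hg; apply: face_at_sub => // u Hu.
    by rewrite /c'' valB Hu ((tE u).2 Hu) mulr0 subr0.
  have [G1|G2] := (hfac i).2.2 _ (face_at_face hc'') sub.
    have : face_at c'' V`_u0 by apply/face_at_vert; rewrite /c'' valB su0 subrr.
    rewrite G1 hg => /face_at_vert /eqP; by rewrite (negbTE (ltr0_neq0 tu0)).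
  have Z := (face_at_P hc'').1 G2.
  exists (fun j => if j == i then e else 0); split.
    by move=> j; case: eqP => // _; exact: ltW.
  move=> u; rewrite (bigD1 i) //= eqxx big1 ?addr0.
    by have := Z u; rewrite /c'' valB => /eqP; rewrite subr_eq0 => /eqP.
  by move=> j /negbTE ->; rewrite mul0r.
have [G [hG [subG neG]]] : exists G, is_face P G /\ face_at c `<=` G /\
    ~ (G = face_at c \/ G = P).
  apply: contrapT => H; apply: nfac; split => //; split => // G hG sG.
  apply: contrapT => nG; apply: H; exists G; split => //.
have [c' [hc' GE]] := face_to_at hG (subG _ (face_at_v c)).
have z1 : forall u, val c u = 0 -> val c' u = 0.
  move=> u /(face_at_vert c u).2 /subG; rewrite GE; exact: (face_at_vert c' u).1.
have [u2 [z2 n2]] : exists u2, val c' u2 = 0 /\ val c u2 < 0.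
  apply: contrapT => H; apply: neG; left; rewrite GE.
  apply/seteqP; split; last by apply: face_at_sub.
  apply: face_at_sub => // u z.
  apply: contrapT => nz; apply: H; exists u; split => //.
  by rewrite lt_neqAle hc andbT; apply/eqP.
have ex1 : exists u, val c' u < 0.
  apply: contrapT => H; apply: neG; right; rewrite GE; apply/face_at_P => // u.
  by apply/eqP; rewrite eq_le hc' /= leNgt; apply/negP => ?; apply: H; exists u.
have ts : forall u, val c' u < 0 -> val c u < 0.
  move=> u tu; rewrite lt_neqAle hc andbT; apply/eqP => /z1 /eqP.
  by rewrite (negbTE (ltr0_neq0 tu)).
have [e [e0 [[u0 [tu0 su0]] hle]]] := minratio hc hc' ts ex1.
set c'' := c - e *: c'.
have hc'' : sup c'' by move=> u; rewrite /c'' valB.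
have card1 : (#|negs c''| < #|negs c|)%N.
  have s1 : negs c'' \subset negs c.
    apply/fintype.subsetP => u; rewrite !inE /c'' valB => H.
    rewrite lt_neqAle hc andbT; apply/eqP => z; move: H.
    by rewrite z (z1 _ z) mulr0 subr0 ltxx.
  apply: proper_card; rewrite properE s1 /=; apply/fintype.subsetPn; exists u0.
    by rewrite inE ts.
  by rewrite inE /c'' valB su0 subrr ltxx.
have card2 : (#|negs c'| < #|negs c|)%N.
  have s1 : negs c' \subset negs c.
    by apply/fintype.subsetP => u; rewrite !inE; exact: ts.
  apply: proper_card; rewrite properE s1 /=; apply/fintype.subsetPn; exists u2.
    by rewrite inE.
  by rewrite inE z2 ltxx.
have [l1 [l10 hl1]] := IH c'' (leq_trans card1 hk) hc''.
have [l2 [l20 hl2]] := IH c' (leq_trans card2 hk) hc'.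
exists (fun i => l1 i + e * l2 i); split.
  by move=> i; rewrite addr_ge0 // mulr_ge0 // ltW.
move=> u.
have -> : val c u = val c'' u + e * val c' u by rewrite /c'' valB; ring.
rewrite hl1 hl2 mulr_sumr -big_split /=; apply: eq_bigr => i _; ring.
Qed.

Hypothesis hvert : is_vertex P v.
Hypothesis hdim : exists x : 'I_d.+1 -> pt, (forall i, P (x i)) /\ aff_indep x.

Lemma Span a : exists mu : 'I_d -> R, forall u, val a u = \sum_i mu i * val (cg i) u.
Proof.
have [c0 [hc0 E0]] := face_to_at hvert (erefl v).
have z0 : forall u, val c0 u = 0 -> val a u = 0.
  move=> u /(face_at_vert c0 u).2; rewrite -E0 /= /val => ->.
  by rewrite subrr.
have [M [M0 HM]] := bigM (val c0) (val a).
have hc1 : sup (a + M *: c0).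
  move=> u; rewrite valD valZ; have [lt|] := ltP (val c0 u) 0.
    exact: ltW (HM u lt).
  move=> ge; have e0 : val c0 u = 0 by apply/eqP; rewrite eq_le hc0.
  by rewrite e0 (z0 _ e0) mulr0 addr0.
have [l1 [_ h1]] := Gen hc1; have [l0 [_ h0]] := Gen hc0.
exists (fun i => l1 i - M * l0 i) => u.
have -> : val a u = val (a + M *: c0) u - M * val c0 u by rewrite valD valZ; ring.
rewrite h1 h0 mulr_sumr -sumrB; apply: eq_bigr => i _; ring.
Qed.

Lemma Indep (mu : 'I_d -> R) : (forall u, \sum_i mu i * val (cg i) u = 0) ->
  forall i, mu i = 0.
Proof.
move=> Hmu.
pose B : 'M[R]_(d, N) := \matrix_(i, u) val (cg i) u.
pose A : 'M[R]_(N, n) := \matrix_(u, j) val (delta_mx 0 j) u.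
have [x [Px hx]] := hdim.
have [om hom] : exists om : 'I_d.+1 -> 'I_N -> R, forall k c,
    dot c (x k) - dot c v = \sum_u om k u * val c u.
  have := fun k => dotP_val (Px k).
  move=> H; have [f hf] := choice (fun k => H k).
  by exists f => k c; case: (hf k) => _ ->.
have XA : (\matrix_(i < d) (x (lift ord0 i) - x ord0) <= A)%MS.
  apply/submxP; exists (\matrix_(i, u) (om (lift ord0 i) u - om ord0 u)).
  apply/matrixP => i j; rewrite !mxE.
  have := hom (lift ord0 i) (delta_mx 0 j); have := hom ord0 (delta_mx 0 j).
  rewrite !dot_delta => E0 E1.
  have -> : x (lift ord0 i) 0 j - x ord0 0 j =
    (x (lift ord0 i) 0 j - v 0 j) - (x ord0 0 j - v 0 j) by ring.
  rewrite E0 E1 -sumrB; apply: eq_bigr => u _; rewrite !mxE; ring.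
have AB : (A^T <= B)%MS.
  have [f hf] := choice (fun j : 'I_n => Span (delta_mx 0 j)).
  apply/submxP; exists (\matrix_(j, i) f j i).
  by apply/matrixP => j u; rewrite !mxE hf; apply: eq_bigr => i _; rewrite !mxE.
have rB : \rank B = d.
  apply/eqP; rewrite eqn_leq rank_leq_row /=.
  rewrite -{1}hx; apply: leq_trans (mxrankS XA) _.
  by rewrite -mxrank_tr; exact: mxrankS AB.
have fB : row_free B by rewrite /row_free rB.
have : (\row_i mu i) *m B == 0.
  by apply/eqP/matrixP => k u; rewrite !mxE -[RHS](Hmu u); apply: eq_bigr => i _; rewrite !mxE.
rewrite mulmx_free_eq0 // => /eqP /matrixP H i.
by have := H 0 i; rewrite !mxE.
Qed.

Lemma sum_nonpos_eq0P (Q : pred 'I_d) (F : 'I_d -> R) :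
  (forall i, Q i -> F i <= 0) -> \sum_(i | Q i) F i = 0 -> forall i, Q i -> F i = 0.
Proof.
move=> H E i qi.
have E' : \sum_(i | Q i) (- F i) = 0 by rewrite sumrN E oppr0.
have hp : forall i, Q i -> 0 <= - F i by move=> j qj; rewrite oppr_ge0 H.
by have /eqP := psumr_eq0P hp E' qi; rewrite oppr_eq0 => /eqP.
Qed.

Lemma A2 (T : pred 'I_d) j : ~~ T j ->
  exists u, (forall i, T i -> val (cg i) u = 0) /\ val (cg j) u < 0.
Proof.
move=> Tj; apply: contrapT => H.
pose s := \sum_(i | T i) cg i.
have vs : forall u, val s u = \sum_(i | T i) val (cg i) u by move=> u; rewrite val_sum.
have hs : sup s by move=> u; rewrite vs; apply: sumr_le0 => i _; exact: hcg.
have ts : forall u, val (cg j) u < 0 -> val s u < 0.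
  move=> u tu; rewrite lt_neqAle hs andbT; apply/eqP => E; apply: H; exists u.
  split => //; apply: (sum_nonpos_eq0P (F := fun i => val (cg i) u)) => [i _|]; [exact: hcg | by rewrite -vs].
have ex1 : exists u, val (cg j) u < 0.
  apply: contrapT => H1; apply: (hfac j).2.1; rewrite hg; apply/face_at_P => // u.
  by apply/eqP; rewrite eq_le hcg /= leNgt; apply/negP => ?; apply: H1; exists u.
have [e [e0 [_ hle]]] := minratio hs (hcg j) ts ex1.
have hc : sup (s - e *: cg j) by move=> u; rewrite valB.
have [lam [lam0 hlam]] := Gen hc.
have HI : forall u,
    \sum_i ((T i)%:R - (i == j)%:R * e - lam i) * val (cg i) u = 0.
  move=> u.
  have E1 : \sum_i (T i)%:R * val (cg i) u = val s u.
    rewrite vs [RHS]big_mkcond /=; apply: eq_bigr => i _.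
    by case: (T i); rewrite ?mul1r ?mul0r.
  have E2 : \sum_i (i == j)%:R * e * val (cg i) u = e * val (cg j) u.
    rewrite (bigD1 j) //= eqxx mul1r big1 ?addr0 // => i /negbTE ->.
    by rewrite !mul0r.
  have E3 := hlam u; rewrite valB in E3.
  under eq_bigr => i _ do rewrite !mulrBl.
  rewrite !sumrB E1 E2 -E3; ring.
have := Indep HI j; rewrite eqxx (negbTE Tj) mul1r sub0r => E.
have := lam0 j; lra.
Qed.

Lemma Coat c : sup c -> forall x, P x ->
  (forall i, face_at c `<=` g i -> g i x) -> face_at c x.
Proof.
move=> hc x Px H; split => //.
have [lam [lam0 hlam]] := Gen hc.
have sub : forall i, 0 < lam i -> face_at c `<=` g i.
  move=> i li; rewrite hg; apply: face_at_sub => // u z.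
  have := hlam u; rewrite z => /esym E.
  have Z := @sum_nonpos_eq0P predT (fun i => lam i * val (cg i) u)
    (fun i _ => mulr_ge0_le0 (lam0 i) (hcg i u)) E i isT.
  by move/eqP: Z; rewrite mulf_eq0 (gt_eqF li) /= => /eqP.
have [w [w0 hw]] := dotP_val Px.
apply/eqP; rewrite -subr_eq0 hw.
under eq_bigr => u _ do rewrite hlam mulr_sumr.
rewrite exchange_big /=; apply/eqP; apply: big1 => i _.
have -> : \sum_u w u * (lam i * val (cg i) u) = lam i * (dot (cg i) x - dot (cg i) v).
  by rewrite hw mulr_sumr; apply: eq_bigr => u _; ring.
have [li|] := ltP 0 (lam i).
  have [_ ->] : face_at (cg i) x by rewrite -hg; exact: H (sub i li).
  by rewrite subrr mulr0.
move=> le; have l0 : lam i = 0 by apply/eqP; rewrite eq_le le lam0.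
by rewrite l0 mul0r.
Qed.


Lemma face_sum (S : {set 'I_d}) x :
  face_at (\sum_(i in S) cg i) x <-> P x /\ forall i, i \in S -> g i x.
Proof.
split.
  move=> [Px tx]; split => // i iS.
  have E : \sum_(k in S) (dot (cg k) x - dot (cg k) v) = 0.
    by rewrite sumrB -!dot_suml tx subrr.
  rewrite hg; split => //; apply/eqP; rewrite -subr_eq0; apply/eqP.
  apply: (sum_nonpos_eq0P (F := fun k => dot (cg k) x - dot (cg k) v) _ E iS).
  by move=> k _; rewrite subr_le0; apply: sup_le.
move=> [Px H]; split => //; apply/eqP; rewrite -subr_eq0 !dot_suml -sumrB.
apply/eqP; apply: big1 => i iS; have := H i iS; rewrite hg => -[_ ->].
by rewrite subrr.
Qed.

Lemma sup_sum (S : {set 'I_d}) : sup (\sum_(i in S) cg i).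
Proof. by move=> u; rewrite val_sum; apply: sumr_le0 => i _; exact: hcg. Qed.

Lemma Bool : interval_boolean P v d.
Proof.
pose phi (F : {F : set pt | is_face P F /\ F v}) : {set 'I_d} :=
  finset (fun i => `[< sval F `<=` g i >]).
have psiP : forall S : {set 'I_d},
    is_face P (face_at (\sum_(i in S) cg i)) /\ face_at (\sum_(i in S) cg i) v.
  by move=> S; split; [exact: face_at_face (sup_sum S)| exact: face_at_v].
pose psi (S : {set 'I_d}) : {F : set pt | is_face P F /\ F v} :=
  exist _ (face_at (\sum_(i in S) cg i)) (psiP S).
have ord : forall F G : {F : set pt | is_face P F /\ F v},
    (sval G `<=` sval F) <-> (phi F \subset phi G).
  move=> [F [hF vF]] [G [hG vG]] /=; split.
    move=> GF; apply/fintype.subsetP => i; rewrite !inE /= => FG.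
    by move=> x Gx; exact: FG x (GF x Gx).
  move=> /fintype.subsetP sub x Gx.
  have [cF [hcF EF]] := face_to_at hF vF.
  have [cG [hcG EG]] := face_to_at hG vG.
  have Px : P x by move: Gx; rewrite EG => -[].
  rewrite EF; apply: Coat => // i FG.
  have : i \in phi (exist _ F (conj hF vF)) by rewrite inE; apply/asboolP; rewrite /= EF.
  by move/sub; rewrite inE => /asboolP; apply.
exists phi; split => //.
apply: (Bijective (g := psi)).
  move=> [F [hF vF]]; apply: eq_exist => /=.
  have [c [hc E]] := face_to_at hF vF.
  apply/seteqP; split => x.
    move/face_sum => [Px H]; rewrite E; apply: Coat => // i Fi.
    by apply: H; rewrite inE; apply/asboolP; rewrite /= E.
  move=> Fx; apply/face_sum; split; first by move: Fx; rewrite E => -[].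
  by move=> i; rewrite inE => /asboolP; apply.
move=> S; apply/setP => i; rewrite inE; apply/asboolP/idP.
  move=> sub; apply: contraT => iS.
  have [u [Hu Hi]] := A2 (T := mem S) iS.
  have : face_at (\sum_(i in S) cg i) V`_u.
    apply/face_sum; split; first exact: conv_vert.
    by move=> k kS; rewrite hg; apply/face_at_vert; exact: Hu.
  move/sub; rewrite hg => /face_at_vert /eqP.
  by rewrite (negbTE (ltr0_neq0 Hi)).
by move=> iS x /face_sum [_ H]; exact: H.
Qed.

Lemma Indep_at k (f : 'I_k -> set pt) : injective f ->
  (forall i, is_facet P (f i)) -> (forall i, f i v) -> independent P f.
Proof.
move=> finj ffac fv.
have [sg hsg] := choice (fun i => hall (ffac i) (fv i)).
move=> j E.
pose T := fun l => [exists i, (i != j) && (sg i == l)].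
have Tj : ~~ T (sg j).
  apply/existsP => -[i /andP [ij /eqP sij]].
  by move: ij; rewrite (finj i j) ?eqxx // hsg sij -hsg.
have [u [Hu Hj]] := A2 Tj.
have : fjoin P f [set i | i != j] V`_u.
  split; first exact: conv_vert.
  move=> i /= ij; rewrite hsg hg; apply/face_at_vert; apply: Hu.
  by rewrite /T; apply/existsP; exists i; rewrite ij eqxx.
rewrite E => -[_ /(_ j Logic.I)]; rewrite hsg hg => /face_at_vert /eqP.
by rewrite (negbTE (ltr0_neq0 Hj)).
Qed.
End Facets.
End AtVertex.

Section Part1.
Variables (R : realType) (n : nat).
Local Notation pt := 'rV[R]_n.

Lemma vertex_in (V : seq pt) v : is_vertex (conv V) v -> conv V v.
Proof. by move=> [c [b [_ E]]]; have : [set v] v by []; rewrite E => -[]. Qed.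

Lemma setup (V : seq pt) d v : is_vertex (conv V) v ->
  (exists f : 'I_d -> set pt, injective f /\
      (forall i, is_facet (conv V) (f i) /\ f i v) /\
      (forall F, is_facet (conv V) F -> F v -> exists i, F = f i)) ->
  exists (g : 'I_d -> set pt) (cg : 'I_d -> pt),
   [/\ forall i, sup V v (cg i), forall i, g i = face_at V v (cg i),
       forall i, is_facet (conv V) (g i) &
       forall F, is_facet (conv V) F -> F v -> exists i, F = g i].
Proof.
move=> hv [g [_ [hg hall]]].
have H : forall i, exists c, sup V v c /\ g i = face_at V v c.
  by move=> i; apply: face_to_at; [exact: (hg i).1.1 | exact: (hg i).2].
have [cg hcg] := choice H.
exists g, cg; split => //; try by move=> i; case: (hcg i).
by move=> i; case: (hg i).
Qed.

Lemma part1 d (P : set pt) : simple_polytope P d ->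
  forall v, is_vertex P v ->
    interval_boolean P v d /\
    (forall (k : nat) (f : 'I_k -> set pt), injective f ->
       (forall i, is_facet P (f i)) ->
       fjoin P f setT <> set0 -> independent P f).
Proof.
move=> [[V ->] [[hdim _] hsimp]] v hv.
split.
  have [g [cg [h1 h2 h3 h4]]] := setup hv (hsimp v hv).
  exact: (Bool (vertex_in hv) h1 h2 h3 h4 hv hdim).
move=> k f finj ffac ne.
have [x fx] : exists x, fjoin (conv V) f setT x.
  by apply: contrapT => H; apply: ne; apply/seteqP; split => // y fy; apply: H; exists y.
have [cf hcf] := choice (fun i => (ffac i).1).
have [bf hbf] := choice hcf.
pose c := \sum_i cf i; pose b := \sum_i bf i.
have hle : forall u : 'I_(size V), dot c V`_u <= b.
  move=> u; rewrite /c dot_suml; apply: ler_sum => i _.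
  by apply: (hbf i).1; exact: conv_vert.
have fiff : forall y, conv V y -> (dot c y = b <-> forall i, f i y).
  move=> y Py; split.
    move=> E i.
    have E' : \sum_i (dot (cf i) y - bf i) = 0 by rewrite sumrB -dot_suml E subrr.
    have hn : forall i, dot (cf i) y - bf i <= 0.
      by move=> j; rewrite subr_le0; exact: (hbf j).1.
    have Z := sum_nonpos_eq0 hn E' i.
    rewrite (hbf i).2; split => //; apply/eqP; rewrite -subr_eq0 Z //.
  move=> H; rewrite /c /b dot_suml; apply: eq_bigr => i _.
  by have := H i; rewrite (hbf i).2 => -[_ ->].
have [Px fxi] : conv V x /\ forall i, f i x by case: fx => Px H; split => // i; apply: H.
have [u tu] : exists u : 'I_(size V), dot c V`_u = b.
  have := Px => -[w [w0 [w1 xE]]].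
  have tx : dot c x = b by apply/(fiff x Px).
  have [u wu] := pos_weight w0 w1.
  exists u; apply: (conv_tight hle w0 w1) => //; by rewrite -xE.
have [w [hw tw]] := exists_vertex hle (ex_intro _ u tu).
have fw : forall i, f i w by apply/(fiff w (vertex_in hw)).
have [g [cg [h1 h2 h3 h4]]] := setup hw (hsimp w hw).
exact: (Indep_at (vertex_in hw) h1 h2 h3 h4 hw hdim finj ffac fw).
Qed.
End Part1.

Section Part2Gen.
Variables (R : realType) (n : nat).
Local Notation pt := 'rV[R]_n.

Lemma third k (j j' : 'I_k) : (2 < k)%N -> exists l : 'I_k, l != j /\ l != j'.
Proof.
move=> k3; apply: contrapT => H.
have sub : [set: 'I_k]%SET \subset [set j; j']%SET.
  apply/fintype.subsetP => l _; rewrite !inE.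
  case: (eqVneq l j) => [//|a]; case: (eqVneq l j') => [//|b].
  by exfalso; apply: H; exists l.
have := subset_leq_card sub; rewrite cardsT card_ord cards2.
by case: (j != j') => /= h; move: k3; rewrite ltnNge; move/negP; apply; apply: leq_trans h _.
Qed.

Lemma indep_pair (P : set pt) k (f : 'I_k -> set pt) : (2 < k)%N ->
  independent P f -> fjoin P f setT = set0 ->
  forall j j', j != j' -> (forall x, f j x -> f j' x -> False) -> False.
Proof.
move=> k3 hind E j j' jj' dis.
have [l [lj lj']] := third j j' k3.
apply: (hind l); rewrite E; apply/seteqP; split => // x [_ H].
apply: (dis x); apply: H => /=; rewrite eq_sym //.
Qed.

Lemma img_nth (T : finType) (F : T -> pt) (A : {pred T})
  (u : 'I_(size [seq F x | x in A])) : exists2 t, t \in A & [seq F x | x in A]`_u = F t.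
Proof. by apply/fintype.imageP; apply: mem_nth. Qed.

Lemma img_idx (T : finType) (F : T -> pt) (A : {pred T}) t : t \in A ->
  exists u : 'I_(size [seq F x | x in A]), [seq F x | x in A]`_u = F t.
Proof.
move=> tA; have mem : F t \in [seq F x | x in A] by apply: fintype.image_f.
by exists (Ordinal (introT idP (etrans (index_mem _ _) mem))); rewrite /= nth_index.
Qed.

Section Faces.
Variable V : seq pt.
Local Notation P := (conv V).
Local Notation N := (size V).

Lemma face_comb F x : is_face P F -> F x -> exists w : 'I_N -> R,
  [/\ forall u, 0 <= w u, \sum_u w u = 1, x = \sum_u w u *: V`_u &
      forall u, 0 < w u -> F V`_u].
Proof.
move=> [c [b [hle ->]]] [[w [w0 [w1 xE]]] tx]; exists w; split => // u wu.
split; first exact: conv_vert.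
apply: (conv_tight (fun u => hle _ (conv_vert u)) w0 w1) => //; by rewrite -xE.
Qed.

Lemma face_comb2 F x : is_face P F -> F x -> forall w : 'I_N -> R,
  (forall u, 0 <= w u) -> \sum_u w u = 1 -> x = \sum_u w u *: V`_u ->
  forall u, 0 < w u -> F V`_u.
Proof.
move=> [c [b [hle ->]]] [Px tx] w w0 w1 xE u wu; split; first exact: conv_vert.
apply: (conv_tight (fun u => hle _ (conv_vert u)) w0 w1) => //; by rewrite -xE.
Qed.

Lemma face_vertex F x : is_face P F -> F x -> exists u : 'I_N, F V`_u.
Proof.
move=> hF Fx; have [w [w0 w1 _ H]] := face_comb hF Fx.
by have [u wu] := pos_weight w0 w1; exists u; apply: H.
Qed.

Lemma face_sub_lin F (a : pt) al : is_face P F ->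
  (forall u : 'I_N, F V`_u -> dot a V`_u = al) -> forall x, F x -> dot a x = al.
Proof.
move=> hF H x Fx; have [w [w0 w1 -> Hw]] := face_comb hF Fx.
rewrite dot_sumr -[RHS]mul1r -w1 mulr_suml; apply: eq_bigr => u _.
rewrite dotZr; have [wu|] := ltP 0 (w u); first by rewrite (H u (Hw u wu)).
move=> le; have w0u : w u = 0 by apply/eqP; rewrite eq_le le w0.
by rewrite w0u !mul0r.
Qed.

Lemma face_allP F : is_face P F -> (forall u : 'I_N, F V`_u) -> F = P.
Proof.
move=> [c [b [hle E]]] H; rewrite E; apply/seteqP; split => x; first by case.
move=> Px; split => //; have := Px => -[w [w0 [w1 xE]]].
apply/eqP; rewrite -subr_eq0 xE conv_dot //; apply/eqP; apply: big1 => u _.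
by have := H u; rewrite E => -[_ ->]; rewrite subrr mulr0.
Qed.

Lemma face_sub_P F : is_face P F -> F `<=` P.
Proof. by move=> [c [b [_ ->]]] x []. Qed.
End Faces.
End Part2Gen.

Section Cube.
Variables (R : realType) (d : nat).
Local Notation pt := 'rV[R]_d.
Definition sgn (b : bool) : R := if b then 1 else -1.
Definition cv (e : {ffun 'I_d -> bool}) : pt := \row_i sgn (e i).
Local Notation V := [seq cv e | e : {ffun 'I_d -> bool}].
Local Notation P := (@cube R d).

Lemma cubeE : P = conv V.
Proof. by []. Qed.

Lemma cube_vert (u : 'I_(size V)) : exists e, V`_u = cv e.
Proof. by have [e _ E] := img_nth u; exists e. Qed.

Lemma cube_vidx e : exists u : 'I_(size V), V`_u = cv e.
Proof. exact: img_idx. Qed.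

Lemma cube_in e : P (cv e).
Proof. by have [u <-] := cube_vidx e; exact: conv_vert. Qed.

Definition H (i : 'I_d) b := [set x : pt | P x /\ x 0 i = sgn b].

Lemma sgn_inj a b : sgn a = sgn b -> a = b.
Proof. by case: a; case: b; rewrite /sgn // => h; exfalso; lra. Qed.

Lemma sgn_sq b : sgn b * sgn b = 1.
Proof. by case: b; rewrite /sgn ?mulr1 ?mulrNN ?mulr1. Qed.

Lemma H_face i b : is_face P (H i b).
Proof.
exists (sgn b *: delta_mx 0 i), 1; split.
  move=> x; rewrite cubeE; apply: conv_le => u.
  have [e ->] := cube_vert u.
  by rewrite dotZl dot_delta mxE; case: b; case: (e i); rewrite /sgn; lra.
apply/seteqP; split => x /=; rewrite dotZl dot_delta.
  by move=> [Px ->]; rewrite sgn_sq.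
move=> [Px E]; split => //.
by rewrite -[x 0 i]mul1r -(sgn_sq b) -mulrA E mulr1.
Qed.

Lemma H_neP i b : H i b <> P.
Proof.
move=> E; have := cube_in [ffun=> ~~ b]; rewrite -E => -[_]; clear E.
by rewrite mxE ffunE; case: b; rewrite /sgn /= => h; lra.
Qed.

Lemma dot_cv (c : pt) e : dot c (cv e) = \sum_j c 0 j * sgn (e j).
Proof. by apply: eq_bigr => j _; rewrite mxE. Qed.

Lemma flip (c : pt) (e : {ffun 'I_d -> bool}) i : dot c (cv [ffun j => if j == i then ~~ e i else e j]) =
  dot c (cv e) + c 0 i * (sgn (~~ e i) - sgn (e i)).
Proof.
rewrite !dot_cv (bigD1 i) //= [in RHS](bigD1 i) //= ffunE eqxx.
have -> : \sum_(j < d | j != i) c 0 j * sgn ([ffun j => if j == i then ~~ e i else e j] j)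
   = \sum_(j < d | j != i) c 0 j * sgn (e j).
  by apply: eq_bigr => j /negbTE ji; rewrite ffunE ji.
ring.
Qed.

Lemma cube_facet F : is_facet P F -> F = set0 \/ exists i b, F = H i b.
Proof.
move=> [hF [FneP Fmax]].
case: (pselect (exists x, F x)) => [[x Fx]|]; last first.
  by move=> nx; left; apply/seteqP; split => // y Fy; apply: nx; exists y.
right; have := hF => -[c [be [hle FE]]].
have Ftight : forall y, F y -> dot c y = be by move=> y; rewrite FE => -[].
have FP : forall y, P y -> dot c y = be -> F y by move=> y Py ty; rewrite FE.
have [u0 Fu0] := face_vertex (V:=V) hF Fx.
case: (pselect (exists i, c 0 i != 0)) => [[i ci]|nc]; last first.
  exfalso; apply: FneP; apply: (face_allP (V:=V) hF) => u.
  have dz : forall y : pt, dot c y = 0.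
    move=> y; rewrite /dot big1 // => j _.
    have -> : c 0 j = 0 by apply/eqP; apply: contrapT => h; apply: nc; exists j; apply/negP.
    by rewrite mul0r.
  apply: FP; first exact: conv_vert.
  by rewrite dz -(Ftight _ Fu0) dz.
pose b := (0 < c 0 i).
have tight : forall e, F (cv e) -> e i = b.
  move=> e Fe; have := hle _ (cube_in [ffun j => if j == i then ~~ e i else e j]).
  rewrite flip (Ftight _ Fe) => h.
  have h' : c 0 i * (sgn (~~ e i) - sgn (e i)) <= 0 by lra.
  rewrite /b; case: (e i) h' => /=; rewrite /sgn => h'.
    by apply/esym; rewrite lt_neqAle eq_sym ci /=; lra.
  by apply/esym/negbTE; rewrite -leNgt; lra.
have sub : F `<=` H i b.
  move=> y Fy; split; first exact: (face_sub_P hF).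
  rewrite -dot_delta; apply: (face_sub_lin (V:=V) hF) Fy => u Fu.
  have [e Ee] := cube_vert u; rewrite Ee dot_delta mxE (tight e) //.
  by rewrite -Ee.
have [E|E] := Fmax _ (H_face i b) sub; first by exists i, b.
by exfalso; apply: (H_neP E).
Qed.


Lemma cube_part k (f : 'I_k -> set pt) : injective f ->
  (forall i, is_facet P (f i)) -> independent P f -> fjoin P f setT = set0 ->
  (k <= 2)%N.
Proof.
move=> finj ffac hind E; rewrite leqNgt; apply/negP => k3.
case: (pselect (exists j, f j = set0)) => [[j fj0]|nz].
  have [l [lj _]] := third j j k3.
  by apply: (indep_pair k3 hind E lj) => x _; rewrite fj0.
have hH : forall j, exists ib : 'I_d * bool, f j = H ib.1 ib.2.
  move=> j; case: (cube_facet (ffac j)) => [e0|[i [b ->]]]; last by exists (i, b).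
  by exfalso; apply: nz; exists j.
have [ib hib] := choice hH.
case: (pselect (exists j j', (ib j).1 = (ib j').1 /\ (ib j).2 != (ib j').2)).
  move=> [j [j' [e1 e2]]].
  have jj' : j != j' by apply: contraNneq e2 => ->.
  apply: (indep_pair k3 hind E jj') => x; rewrite !hib => -[_ h1] [_ h2].
  move: h1 h2; rewrite e1 => -> /sgn_inj h; move: e2; rewrite h eqxx.
  done.
move=> nc.
pose e := [ffun i => if [pick j | (ib j).1 == i] is Some j then (ib j).2 else true].
have : fjoin P f setT (cv e).
  split; first exact: cube_in.
  move=> j _; rewrite hib; split; first exact: cube_in.
  rewrite mxE ffunE; case: pickP => [j' /eqP hj'|none]; last first.
    by have := none j; rewrite eqxx.
  congr sgn; apply: contrapT => ne; apply: nc; exists j', j; split => //.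
  by apply/negP => /eqP.
by rewrite E.
Qed.
End Cube.

Section Perm.
Variables (R : realType) (d : nat) (m : 'I_d.+1 -> nat).
Hypothesis hm : forall i j : 'I_d.+1, (i < j)%N -> (m i < m j)%N.
Local Notation pt := 'rV[R]_d.+1.
Definition pv (s : 'S_d.+1) : pt := \row_i (m (s i))%:R.
Local Notation V := [seq pv s | s : 'S_d.+1].
Local Notation P := (@permutohedron R d m).

Lemma permE : P = conv V.
Proof. by []. Qed.

Lemma perm_vert (u : 'I_(size V)) : exists s, V`_u = pv s.
Proof. by have [s _ E] := img_nth u; exists s. Qed.

Lemma perm_vidx s : exists u : 'I_(size V), V`_u = pv s.
Proof. exact: img_idx. Qed.

Lemma perm_in s : P (pv s).
Proof. by have [u <-] := perm_vidx s; exact: conv_vert. Qed.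

Lemma dot_pv (c : pt) s : dot c (pv s) = \sum_j c 0 j * (m (s j))%:R.
Proof. by apply: eq_bigr => j _; rewrite mxE. Qed.

Lemma mlt (a b : 'I_d.+1) : (a < b)%N -> (m a)%:R < (m b)%:R :> R.
Proof. by move=> ab; rewrite ltr_nat hm. Qed.

Lemma swap (c : pt) s : (forall t, dot c (pv t) <= dot c (pv s)) ->
  forall i j, c 0 i < c 0 j -> (s i < s j)%N.
Proof.
move=> Hmax i j cij; rewrite ltnNge; apply/negP => ji.
have ij : i != j by apply: contraTneq cij => ->; rewrite ltxx.
have sji : (s j < s i)%N.
  rewrite ltn_neqAle ji andbT; apply: contra ij => /eqP E.
  by apply/eqP; apply: (perm_inj (s:=s)); apply: val_inj; rewrite /= E.
pose t := (tperm i j * s)%g.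
have := Hmax t; rewrite !dot_pv.
rewrite (reindex_inj (@perm_inj _ (tperm i j))) /=.
have E : forall x, t (tperm i j x) = s x.
  by move=> x; rewrite /t permM tpermK.
under eq_bigr => x _ do rewrite E.
rewrite -subr_ge0 -sumrB (bigD1 i) //= (bigD1 j) /=; last by rewrite eq_sym.
rewrite big1; last first.
  move=> x /andP [xi xj]; rewrite tpermD 1?eq_sym //; ring.
rewrite tpermL tpermR addr0.
have h1 := mlt sji; have h2 : 0 < c 0 j - c 0 i by rewrite subr_gt0.
have h3 : 0 < (m (s i))%:R - (m (s j))%:R :> R by rewrite subr_gt0.
have := mulr_gt0 h2 h3; nra.
Qed.


Definition upP (s : 'S_d.+1) (S : {set 'I_d.+1}) :=
  forall i j, i \in S -> (s i < s j)%N -> j \in S.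

Lemma nested s S S' : upP s S -> upP s S' -> (S \subset S') \/ (S' \subset S).
Proof.
move=> u1 u2; case: (boolP (S \subset S')) => [|/fintype.subsetPn [i iS iS']]; first by left.
right; apply/fintype.subsetP => j jS'; case: (ltngtP (s i) (s j)) => [lt|lt|eq].
- by apply: u1 lt.
- by move: iS'; rewrite (u2 _ _ jS' lt).
- have : s i = s j by apply: val_inj.
  by move/perm_inj => E; move: iS'; rewrite E jS'.
Qed.

Lemma up_img s S : upP s S -> upP 1 (s @: S)%SET.
Proof.
move=> u r r' /imsetP [i iS ->]; rewrite !perm1 => lt.
have E : r' = s ((s^-1)%g r') by rewrite permKV.
rewrite E; apply: imset_f; apply: (u i) => //; by rewrite -E.
Qed.

Lemma up_eq U U' : upP 1 U -> upP 1 U' -> #|U| = #|U'| -> U = U'.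
Proof.
move=> u1 u2 c; case: (nested u1 u2) => sub; apply/eqP.
  by rewrite eqEcard sub c leqnn.
by rewrite eq_sym eqEcard sub c leqnn.
Qed.

Definition ind (S : {set 'I_d.+1}) : pt := \row_i (i \in S)%:R.

Lemma dot_ind S s : dot (ind S) (pv s) = \sum_(i in S) (m (s i))%:R.
Proof.
rewrite dot_pv [RHS]big_mkcond; apply: eq_bigr => i _; rewrite mxE.
by case: (i \in S); rewrite ?mul1r ?mul0r.
Qed.

Lemma val_up s s' S : upP s S -> upP s' S ->
  dot (ind S) (pv s) = dot (ind S) (pv s').
Proof.
move=> u1 u2; rewrite !dot_ind.
rewrite -(big_imset (fun r => (m r)%:R) (in2W (@perm_inj _ s))).
rewrite -(big_imset (fun r => (m r)%:R) (in2W (@perm_inj _ s'))).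
have -> // : (s @: S)%SET = (s' @: S)%SET.
apply: up_eq; [exact: up_img|exact: up_img|].
by rewrite !card_imset //; exact: perm_inj.
Qed.

Lemma exists_max (c : pt) : exists s, forall t, dot c (pv t) <= dot c (pv s).
Proof.
case: (@arg_maxP _ R _ 1%g predT (fun t => dot c (pv t)) isT) => s _ H.
by exists s => t; apply: H.
Qed.

Definition HS S := [set x : pt | P x /\ forall t, dot (ind S) (pv t) <= dot (ind S) x].

Lemma HS_faceE S : exists b, (forall x, P x -> dot (ind S) x <= b) /\
  HS S = [set x | P x /\ dot (ind S) x = b].
Proof.
have [s hs] := exists_max (ind S).
have hle : forall x, P x -> dot (ind S) x <= dot (ind S) (pv s).
  move=> x; rewrite permE; apply: conv_le => u.
  by have [t ->] := perm_vert u; apply: hs.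
exists (dot (ind S) (pv s)); split => //.
apply/seteqP; split => x /= [Px H]; split => //.
  by apply/eqP; rewrite eq_le hle // H.
by move=> t; rewrite H.
Qed.

Lemma HS_face S : is_face P (HS S).
Proof. by have [b [h E]] := HS_faceE S; exists (ind S), b. Qed.

Lemma tight_up S s : (forall t, dot (ind S) (pv t) <= dot (ind S) (pv s)) -> upP s S.
Proof.
move=> H i j iS lt; apply: contraT => jS.
have : (s j < s i)%N.
  apply: (swap H); rewrite !mxE iS (negbTE jS) ltr01 //.
by rewrite ltnNge (ltnW lt).
Qed.

Lemma HS_vert S s : HS S (pv s) <-> upP s S.
Proof.
split; first by move=> [_ H]; exact: tight_up.
move=> u; split; first exact: perm_in.
have [t ht] := exists_max (ind S).
by move=> t'; rewrite (val_up u (tight_up ht)); apply: ht.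
Qed.

Lemma perm_facet F : is_facet P F -> F = set0 \/ exists S, F = HS S.
Proof.
move=> [hF [FneP Fmax]].
case: (pselect (exists x, F x)) => [[x Fx]|]; last first.
  by move=> nx; left; apply/seteqP; split => // y Fy; apply: nx; exists y.
right; have := hF => -[c [be [hle FE]]].
have Ftight : forall y, F y -> dot c y = be by move=> y; rewrite FE => -[].
have FP : forall y, P y -> dot c y = be -> F y by move=> y Py ty; rewrite FE.
have [u0 Fu0] := face_vertex (V:=V) hF Fx.
have [s0 Es0] := perm_vert u0; rewrite Es0 in Fu0.
have tmax : forall s, F (pv s) -> forall t, dot c (pv t) <= dot c (pv s).
  by move=> s Fs t; rewrite (Ftight _ Fs); apply: hle; exact: perm_in.
case: (@arg_maxP _ R _ ord0 predT (fun i => c 0 i) isT) => imax _ Himax.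
have cle : forall i, c 0 i <= c 0 imax by move=> i; apply: Himax.
pose S := [set i | c 0 imax <= c 0 i]%SET.
case: (pselect (exists j, c 0 j < c 0 imax)) => [[j0 cj0]|nc]; last first.
  exfalso; apply: FneP; apply: (face_allP (V:=V) hF) => u.
  have [s Es] := perm_vert u; rewrite Es.
  have ceq : forall i, c 0 i = c 0 imax.
    move=> i; apply/eqP; rewrite eq_le cle /= leNgt; apply/negP => h.
    by apply: nc; exists i.
  have val : forall t, dot c (pv t) = c 0 imax * \sum_i (m i)%:R.
    move=> t; rewrite dot_pv mulr_sumr [RHS](reindex_inj (@perm_inj _ t)) /=.
    by apply: eq_bigr => i _; rewrite ceq.
  by apply: FP; [exact: perm_in | rewrite val -(val s0); exact: Ftight].
have upF : forall s, F (pv s) -> upP s S.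
  move=> s Fs i j; rewrite !inE => ci lt; apply: contraT; rewrite -ltNge => cj.
  have : (s j < s i)%N by apply: (swap (tmax s Fs)); apply: lt_le_trans cj ci.
  by rewrite ltnNge (ltnW lt).
have [b [hb HE]] := HS_faceE S.
have sub : F `<=` HS S.
  move=> y Fy; rewrite HE; split; first exact: (face_sub_P hF).
  apply: (face_sub_lin (V:=V) hF) Fy => u Fu.
  have [s Es] := perm_vert u; rewrite Es in Fu *.
  by have := (HS_vert S s).2 (upF s Fu); rewrite HE => -[].
have [E|E] := Fmax _ (HS_face S) sub; first by exists S.
exfalso.
have [t ht] := exists_max (ind S).
have ut := tight_up ht.
have iS : imax \in S by rewrite inE.
have jS : j0 \notin S by rewrite inE -ltNge.
have tji : (t j0 < t imax)%N.
  case: (ltngtP (t j0) (t imax)) => // [lt|eq].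
    by move: jS; rewrite (ut _ _ iS lt).
  have : t j0 = t imax by apply: val_inj.
  by move/perm_inj => ej; move: jS; rewrite ej iS.
pose sg := (tperm imax j0 * t)%g.
have : HS S (pv sg) by rewrite E; exact: perm_in.
move/(HS_vert S sg) => usg.
have : (sg imax < sg j0)%N by rewrite !permM tpermL tpermR.
by move/(usg _ _ iS); rewrite (negbTE jS).
Qed.

Lemma perm_part k (f : 'I_k -> set pt) : injective f ->
  (forall i, is_facet P (f i)) -> independent P f -> fjoin P f setT = set0 ->
  (k <= 2)%N.
Proof.
move=> finj ffac hind E; rewrite leqNgt; apply/negP => k3.
case: (pselect (exists j, f j = set0)) => [[j fj0]|nz].
  have [l [lj _]] := third j j k3.
  by apply: (indep_pair k3 hind E lj) => x _; rewrite fj0.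
have hH : forall j, exists S, f j = HS S.
  move=> j; case: (perm_facet (ffac j)) => [e0|//].
  by exfalso; apply: nz; exists j.
have [Sf hSf] := choice hH.
case: (pselect (exists j j', ~~ (Sf j \subset Sf j') /\ ~~ (Sf j' \subset Sf j))).
  move=> [j [j' [n1 n2]]].
  have jj' : j != j' by apply: contraNneq n1 => ->; exact: subxx.
  apply: (indep_pair k3 hind E jj') => x; rewrite !hSf => h1 h2.
  have := face_sub_P (HS_face _) h1 => -[w [w0 [w1 xE]]].
  have [u wu] := pos_weight w0 w1.
  have v1 := face_comb2 (V:=V) (HS_face _) h1 w0 w1 xE wu.
  have v2 := face_comb2 (V:=V) (HS_face _) h2 w0 w1 xE wu.
  have [s Es] := perm_vert u; rewrite Es in v1 v2.
  have := nested ((HS_vert _ s).1 v1) ((HS_vert _ s).1 v2).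
  by case; [move: n1 | move: n2] => /negP.
move=> nc.
have chain : forall j j', Sf j \subset Sf j' \/ Sf j' \subset Sf j.
  move=> j j'; case: (boolP (Sf j \subset Sf j')) => [|n1]; first by left.
  case: (boolP (Sf j' \subset Sf j)) => [|n2]; first by right.
  by exfalso; apply: nc; exists j, j'.
pose L (i : 'I_d.+1) := #|[set l | i \in Sf l]%SET|.
pose c : pt := \row_i (L i)%:R.
have [s hs] := exists_max c.
have us : forall j, upP s (Sf j).
  move=> j i i' iS lt; apply: contraT => i'S.
  have : (L i' < L i)%N.
    apply: proper_card; rewrite properE; apply/andP; split.
      apply/fintype.subsetP => l; rewrite !inE => i'l.
      case: (chain l j) => /fintype.subsetP h; last exact: h.
      by move: i'S; rewrite (h _ i'l).
    apply/fintype.subsetPn; exists j; by rewrite !inE.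
  move=> Lt; have : (s i' < s i)%N.
    by apply: (swap hs); rewrite !mxE ltr_nat.
  by rewrite ltnNge (ltnW lt).
have : fjoin P f setT (pv s).
  split; first exact: perm_in.
  by move=> j _; rewrite hSf; apply/HS_vert.
by rewrite E.
Qed.
End Perm.

Unset Implicit Arguments.

Theorem proposition3 (R : realType) :
  (* (1) *)
  (forall (n d : nat) (P : set 'rV[R]_n), simple_polytope P d ->
     forall v, is_vertex P v ->
       interval_boolean P v d /\
       (forall (k : nat) (f : 'I_k -> set 'rV[R]_n), injective f ->
          (forall i, is_facet P (f i)) ->
          fjoin P f setT <> set0 -> independent P f)) /\
  (* (2), the d-cube *)
  (forall (d k : nat) (f : 'I_k -> set 'rV[R]_d), injective f ->
     (forall i, is_facet (@cube R d) (f i)) ->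
     independent (@cube R d) f -> fjoin (@cube R d) f setT = set0 ->
     (k <= 2)%N) /\
  (* (2), the d-permutohedron, for integers 0 <= m_1 < ... < m_(d+1) *)
  (forall (d : nat) (m : 'I_d.+1 -> nat), (forall i j : 'I_d.+1, i < j -> m i < m j)%N ->
     forall (k : nat) (f : 'I_k -> set 'rV[R]_d.+1), injective f ->
     (forall i, is_facet (@permutohedron R d m) (f i)) ->
     independent (@permutohedron R d m) f ->
     fjoin (@permutohedron R d m) f setT = set0 ->
     (k <= 2)%N).
Proof.
split; first by move=> n d P hs v hv; exact: part1.
split; first by move=> d k f; exact: cube_part.
by move=> d m hm k f; exact: (perm_part hm).
Qed.
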